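(* Let $t\in\mathbb{R}$ and $m\in\mathbb{N}$. Define polynomials $B_n(t,m;x)$ by $$\sum_{n=0}^\infty B_n(t,m;x)\frac{z^n}{n!}=\left(\frac{z^m/m!}{e^z-\sum_{k=0}^{m-1}z^k/k!}\right)^te^{xz}$$ for $z$ in a neighborhood of $0$. Then for every $n\in\mathbb{N}_0$, $$B_n(t,m;0)=\sum_{k=0}^n\binom{-t}{k}\binom{n+t}{n-k}C(m,n,k),\qquad C(m,n,k)=n!\,(m!)^k\sum_{j_1+\cdots+j_k=n}\frac{1}{(m+j_1)!\cdots(m+j_k)!},$$ where the sum runs over $(j_1,\ldots,j_k)\in\mathbb{N}_0^k$ (for $k=0$, $C(m,n,0)=\delta_{n0}$). *)

(* Defs.v *)
From Stdlib Require Import Reals List Arith.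
Import ListNotations.
Open Scope R_scope.

Fixpoint sumR (n : nat) (f : nat -> R) : R :=
  match n with
  | O => 0
  | S n' => sumR n' f + f n'
  end.

Fixpoint prodR (n : nat) (f : nat -> R) : R :=
  match n with
  | O => 1
  | S n' => prodR n' f * f n'
  end.

Definition gbinom (a : R) (k : nat) : R :=
  prodR k (fun i => a - INR i) / INR (fact k).

(* The base function  (z^m/m!) / (e^z - sum_{k<m} z^k/k!),
   extended at z = 0 by its limit value 1 (removable singularity). *)
Definition Gbase (m : nat) (z : R) : R :=
  if Req_EM_T z 0 then 1
  else (z ^ m / INR (fact m)) / (exp z - sumR m (fun k => z ^ k / INR (fact k))).

Fixpoint tuples (k N : nat) : list (list nat) :=
  match k with
  | O => [ [] ]
  | S k' => flat_map (fun j => map (cons j) (tuples k' N)) (seq 0 (N + 1))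
  end.

Definition list_sumn (l : list nat) : nat := fold_right Nat.add 0%nat l.

Definition Ccoef (m n k : nat) : R :=
  INR (fact n) * (INR (fact m)) ^ k *
  fold_right Rplus 0
    (map (fun js => / fold_right Rmult 1 (map (fun j => INR (fact (m + j))) js))
         (filter (fun js => Nat.eqb (list_sumn js) n) (tuples k n))).

Definition egf_near0 (b : nat -> R) (F : R -> R) : Prop :=
  exists delta : R, delta > 0 /\
    forall z : R, Rabs z < delta ->
      infinite_sum (fun n => b n * z ^ n / INR (fact n)) (F z).

(* Main.v *)
Require Import Defs.
From Stdlib Require Import Reals Lra Lia Arith List.
From Coquelicot Require Import Coquelicot.
Open Scope R_scope.

Definition hh (m j : nat) : R := INR (fact m) / INR (fact (m + j)).
Fixpoint ee (m k n : nat) : R := match k with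
 | O => if Nat.eqb n 0 then 1 else 0
 | S k' => sum_f_R0 (fun j => hh m j * ee m k' (n - j)) n end.

Definition nR (n : nat) : R := INR n.
Arguments nR : simpl never.

Definition REC m s (u : nat -> R) n :=
  sum_f_R0 (fun i => hh m i * (nR (S (n - i)) * u (S (n - i))%nat)) n
   = s * sum_f_R0 (fun i => nR (S i) * hh m (S i) * u (n - i)%nat) n.

Definition RECS m s (u : nat -> R) n :=
  nR (S n) * u (S n) = s * sumR (S n) (fun i => nR (S i) * hh m (S i) * u (n - i)%nat)
      - sumR n (fun i => hh m (S i) * (nR (n - i) * u (n - i)%nat)).

Definition formula m s n :=
  sumR (S n) (fun k => gbinom s k * gbinom (INR n - s) (n - k) * ee m k n).

Module Alg.
From HB Require Import structures.
From mathcomp Require Import all_boot all_algebra.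
From mathcomp Require Import Rstruct.
From mathcomp Require Import ring.
Import GRing.Theory Num.Theory.
Local Open Scope ring_scope.

Lemma sumE (f : nat -> R) n : sum_f_R0 f n = \sum_(i < n.+1) f i.
Proof. by rewrite sum_f_R0E big_mkord. Qed.

Definition Hp m N : {poly R} := \poly_(j < N) hh m j.

Lemma coef_Hpow m N k j : (j < N)%nat -> (Hp m N ^+ k)`_j = ee m k j.
Proof.
elim: k j => [|k IH] j hj.
  by rewrite expr0 coef1; case: j hj.
rewrite exprS coefM /= sumE; apply: eq_bigr => i _.
rewrite coef_poly ifT; last by apply: leq_ltn_trans hj; rewrite -ltnS.
rewrite IH //; apply: leq_ltn_trans hj; exact: leq_subr.
Qed.

Lemma nRE n : nR n = n%:R. Proof. exact: INRE. Qed.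

Lemma ode_e m k n : sum_f_R0 (fun i => hh m i * (nR (S (n - i)) * ee m k (S (n - i)))) n
   = nR k * sum_f_R0 (fun i => nR (S i) * hh m (S i) * ee m k (n - i)) n.
Proof.
have key : Hp m n.+2 * (Hp m n.+2 ^+ k)^`() = ((Hp m n.+2)^`() * Hp m n.+2 ^+ k) *+ k.
  case: k => [|k]; first by rewrite expr0 mulr0n -polyC1 derivC mulr0.
  by rewrite deriv_exp /= mulrnAr mulrCA -exprS.
have E := congr1 (fun q : {poly R} => q`_n) key; move: E; rewrite /= coefMn !coefM => E.
rewrite !sumE nRE mulr_natl.
transitivity (\sum_(j < n.+1) (Hp m n.+2)`_j * (Hp m n.+2 ^+k)^`()`_(n-j)).
  apply: eq_bigr => i _.
  rewrite coef_deriv coef_poly ifT; last by apply: leq_trans (ltn_ord i) _.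
  rewrite coef_Hpow; last by rewrite ltnS ltnS leq_subr.
  by rewrite nRE mulr_natl.
rewrite E; congr (_ *+ _); apply: eq_bigr => i _.
rewrite coef_deriv coef_poly ifT; last by rewrite ltnS; exact: ltn_ord.

rewrite coef_Hpow; last by rewrite ltnS (leq_trans (leq_subr _ _)).
by rewrite nRE mulr_natl mulrnAl.
Qed.


Lemma sumRE (f : nat -> R) n : sumR n f = \sum_(i < n) f i.
Proof. by elim: n => [|n IH]; rewrite ?big_ord0 // big_ord_recr /= IH. Qed.

Lemma hh0 m : hh m 0 = 1.
Proof. by rewrite /hh Nat.add_0_r RdivE divff // INRE factE pnatr_eq0 -lt0n fact_gt0. Qed.

Lemma REC_split m s u n : REC m s u n <-> RECS m s u n.
Proof.
have key : forall a X Y S : R, X = Y -> (a + X = S <-> a = S - Y).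
  by move=> a X Y S ->; split => [<- | ->]; rewrite ?addrK ?subrK.
rewrite /REC /RECS !sumE !sumRE big_ord_recl hh0 Nat.sub_0_r RmultE mul1r.
apply: key; apply: eq_bigr => i _; rewrite lift0.
have -> : S (Nat.sub n i.+1) = Nat.sub n i by apply: subnSK.
by [].
Qed.

Lemma REC_unique m s u v : u 0%nat = v 0%nat -> (forall n, REC m s u n) -> (forall n, REC m s v n) ->
  forall n, u n = v n.
Proof.
move=> h0 hu hv n; elim/ltn_ind: n => [[|n]] IH //.
have := hu n; have := hv n; rewrite !REC_split => Ev Eu.
have nz : nR n.+1 != 0 by rewrite nRE pnatr_eq0.
apply: (mulfI nz); rewrite /RECS in Eu Ev.
change (Rmult (nR n.+1) (u n.+1) = Rmult (nR n.+1) (v n.+1)); rewrite Eu Ev !sumRE.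
congr (Rminus (Rmult _ _) _).
  apply: eq_bigr => i _; rewrite IH //.
  by rewrite ltnS leq_subr.
apply: eq_bigr => i _; rewrite IH //.
by rewrite ltnS leq_subr.
Qed.

Definition stepQ m n (f : nat -> {poly R}) : {poly R} :=
  (n.+1%:R)^-1 *: ('X * \sum_(i < n.+1) ((i.+1)%:R * hh m i.+1) *: f (n - i)%nat
                   - \sum_(i < n) (hh m i.+1 * (n - i)%:R) *: f (n - i)%nat).

Lemma stepQ_ext m n f g : (forall j, (j <= n)%nat -> f j = g j) -> stepQ m n f = stepQ m n g.
Proof.
move=> fg; rewrite /stepQ; congr (_ *: (_ * _ - _)).
  by apply: eq_bigr => i _; rewrite fg // leq_subr.
by apply: eq_bigr => i _; rewrite fg // leq_subr.
Qed.

Fixpoint Qs m n : seq {poly R} :=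
  if n is n'.+1 then rcons (Qs m n') (stepQ m n' (fun j => nth 0 (Qs m n') j)) else [:: 1].
Definition Q m n := nth 0 (Qs m n) n.

Lemma size_Qs m n : size (Qs m n) = n.+1.
Proof. by elim: n => //= n IH; rewrite size_rcons IH. Qed.

Lemma nth_Qs m n j : (j <= n)%nat -> nth 0 (Qs m n) j = Q m j.
Proof.
elim: n => [|n IH]; first by rewrite leqn0 => /eqP ->.
rewrite leq_eqVlt => /orP [/eqP -> // | hj].
by rewrite /= nth_rcons size_Qs hj IH.
Qed.

Lemma Q0 m : Q m 0 = 1. Proof. by []. Qed.

Lemma aa0' m s : (Q m 0).[s] = 1. Proof. by rewrite Q0 hornerC. Qed.

Lemma QS m n : Q m n.+1 = stepQ m n (Q m).
Proof.
rewrite /Q /= nth_rcons size_Qs ltnn eqxx.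
by apply: stepQ_ext => j hj; rewrite nth_Qs.
Qed.

Definition aa m s n := (Q m n).[s].

Lemma aa0 m s : aa m s 0 = 1. Proof. exact: aa0'. Qed.

Lemma aa_REC m s n : REC m s (aa m s) n.
Proof.
apply/REC_split; rewrite /RECS /aa !RmultE RminusE QS /stepQ hornerZ hornerD hornerN hornerM hornerX !horner_sum.
rewrite nRE mulrA mulfV ?pnatr_eq0 // mul1r !sumRE.
congr (_ * _ - _).
  by apply: eq_bigr => i _; rewrite hornerZ nRE RmultE.
by apply: eq_bigr => i _; rewrite hornerZ nRE !RmultE mulrA.
Qed.

Lemma ee0 m k : ee m k 0 = 1.
Proof. by elim: k => //= k IH; rewrite /sum_f_R0 IH hh0 RmultE mulr1. Qed.

Lemma Q_nat m k n : (Q m n).[k%:R] = ee m k n.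
Proof.
apply: (@REC_unique m (k%:R) (aa m k%:R) (ee m k)) => //.
  by rewrite /aa Q0 hornerC ee0.
  exact: aa_REC.
by move=> j; rewrite /REC ode_e nRE.
Qed.


Lemma size_sum_le (I : Type) (r : seq I) (P : pred I) (F : I -> {poly R}) k :
  (forall i, P i -> (size (F i) <= k)%nat) -> (size (\sum_(i <- r | P i) F i)%R <= k)%nat.
Proof.
move=> H; apply: (big_ind (fun p : {poly R} => (size p <= k)%nat)) => //.
  by rewrite size_poly0.
by move=> p q hp hq; apply: leq_trans (size_polyD _ _) _; rewrite geq_max hp hq.
Qed.

Lemma size_Q m n : (size (Q m n) <= n.+1)%nat.
Proof.
elim/ltn_ind: n => [[|n]] IH; first by rewrite Q0 size_poly1.
rewrite QS /stepQ; apply: leq_trans (size_scale_leq _ _) _.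
apply: leq_trans (size_polyD _ _) _; rewrite size_polyN geq_max; apply/andP; split.
  apply: leq_trans (size_polyMleq _ _) _; rewrite size_polyX.
  set S := (\sum_(i < n.+1) _)%R.
  suff hs : (size S <= n.+1)%nat by exact: hs.
  apply: size_sum_le => i _; apply: leq_trans (size_scale_leq _ _) _.
  apply: leq_trans (IH _ _) _; first by rewrite ltnS leq_subr.
  by rewrite ltnS leq_subr.
apply: size_sum_le => i _; apply: leq_trans (size_scale_leq _ _) _.
apply: leq_trans (IH _ _) _; first by rewrite ltnS ?leq_subr.
by rewrite ltnS (leq_trans (leq_subr _ _)).  
Qed.

Lemma size_prod_le (k : nat) (F : nat -> {poly R}) :
  (forall j, (size (F j) <= 2)%nat) -> (size (\prod_(j < k) F j)%R <= k.+1)%nat.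
Proof.
move=> H; elim: k => [|k IH]; first by rewrite big_ord0 size_poly1.
rewrite big_ord_recr /=; apply: leq_trans (size_polyMleq _ _) _.
have := H k; have := IH; move: (size (\prod_(i < k) F i)%R) (size (F k)) => a b ha hb.
by case: a ha => [|a] ha; case: b hb => [|b] hb //=; rewrite ?addn0 ?addnS ?addSn /=; lia.
Qed.

Definition bp k : {poly R} := \prod_(j < k) ('X - (j%:R)%:P).
Definition bq n k : {poly R} := \prod_(j < (n - k)%nat) ((n%:R - j%:R)%:P - 'X).
Definition T m n : {poly R} :=
  \sum_(k < n.+1) (ee m k n / ((k`!)%:R * ((n - k)`!)%:R)) *: (bp k * bq n k).

Lemma size_T m n : (size (T m n) <= n.+1)%nat.
Proof.
apply: size_sum_le => k _; apply: leq_trans (size_scale_leq _ _) _.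
apply: leq_trans (size_polyMleq _ _) _.
have h1 : (size (bp k) <= k.+1)%nat.
  by apply: (size_prod_le k (fun j => 'X - (j%:R)%:P)) => j; rewrite size_XsubC.
have h2 : (size (bq n k) <= (n - k).+1)%nat.
  apply: (size_prod_le (n - k) (fun j => (n%:R - j%:R)%:P - 'X)) => j.
  by rewrite -opprB size_polyN size_XsubC.
have hk : (k <= n)%nat by rewrite -ltnS.
move: h1 h2; move: (size (bp k)) (size (bq n k)) => a b ha hb.
have : (a + b <= n.+2)%nat by apply: leq_trans (leq_add ha hb) _; rewrite addSn addnS subnKC.
by case: (a + b)%nat => [|c] //=.
Qed.

Lemma prodRE (f : nat -> R) n : prodR n f = \prod_(i < n) f i.
Proof. by elim: n => [|n IH]; rewrite ?big_ord0 // big_ord_recr /= IH. Qed.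

Lemma prod_fact a : \prod_(j < a) (a%:R - j%:R) = (a`!)%:R :> R.
Proof.
elim: a => [|a IH]; first by rewrite big_ord0.
rewrite big_ord_recl /= subr0 factS natrM; congr (_ * _).
rewrite -IH; apply: eq_bigr => j _; rewrite /= -!natr1; ring.
Qed.

Lemma prod_zero k (F : nat -> R) j0 : (j0 < k)%nat -> F j0 = 0 -> \prod_(j < k) F j = 0.
Proof. by move=> h hz; rewrite (bigD1 (Ordinal h)) //= hz mul0r. Qed.

Lemma fact_neq0 k : (k`!)%:R != 0 :> R.
Proof. by rewrite pnatr_eq0 -lt0n fact_gt0. Qed.

Lemma T_nat m n k0 : (k0 <= n)%nat -> (T m n).[k0%:R] = ee m k0 n.
Proof.
move=> hk0; have hk0' : (k0 < n.+1)%nat by [].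
rewrite /T horner_sum (bigD1 (Ordinal hk0')) //= big1 ?addr0.
  rewrite hornerZ hornerM /bp /bq !horner_prod.
  have -> : \prod_(j < k0) ('X - (j%:R)%:P).[k0%:R] = (k0`!)%:R :> R.
    by rewrite -prod_fact; apply: eq_bigr => j _; rewrite hornerXsubC.
  have -> : \prod_(j < n - k0) ((n%:R - j%:R)%:P - 'X).[k0%:R] = ((n - k0)`!)%:R :> R.
    rewrite -prod_fact; apply: eq_bigr => j _.
    by rewrite hornerD hornerN hornerC hornerX natrB //; ring.
  by rewrite divfK // mulf_neq0 // fact_neq0.
move=> k hk; rewrite hornerZ hornerM /bp /bq !horner_prod.
have hk1 : k != k0 :> nat by apply: contra hk => /eqP E; apply/eqP/val_inj.
case: (ltngtP k k0) => [lt | gt | eq]; last by rewrite eq eqxx in hk1.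
  rewrite (@prod_zero (n - k) (fun j => ((n%:R - j%:R)%:P - 'X).[k0%:R]) (n - k0)).
  - by rewrite !mulr0.
  - by rewrite ltn_sub2l // (leq_trans lt).
  by rewrite hornerD hornerN hornerC hornerX natrB //; ring.
rewrite (@prod_zero k (fun j => ('X - (j%:R)%:P).[k0%:R]) k0) //.
  by rewrite mul0r mulr0.
by rewrite hornerXsubC subrr.
Qed.

Lemma Q_eq_T m n : Q m n = T m n.
Proof.
apply: subr0_eq; apply/eqP; apply: contraT => hD.
have := max_poly_roots hD (rs := [seq i%:R | i <- iota 0 n.+1]).
rewrite size_map size_iota.
have -> : all (root (Q m n - T m n)) [seq i%:R | i <- iota 0 n.+1].
  apply/allP => x /mapP [i]; rewrite mem_iota add0n => /andP [_ hi] ->.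
  by rewrite /root hornerD hornerN Q_nat T_nat // subrr.
rewrite map_inj_uniq ?iota_uniq; last exact: (mulrIn (oner_neq0 R)).
move=> /(_ isT isT) h.
have hs : (size (Q m n - T m n)%R <= n.+1)%nat.
  by apply: leq_trans (size_polyD _ _) _; rewrite size_polyN geq_max size_Q size_T.
by rewrite ltnNge hs in h.
Qed.

Lemma aa_formula m s n : aa m s n = formula m s n.
Proof.
rewrite /aa Q_eq_T /T horner_sum /formula sumRE; apply: eq_bigr => k _.
rewrite hornerZ hornerM /bp /bq !horner_prod /gbinom !prodRE.
have -> : \prod_(j < k) ('X - (j%:R)%:P).[s] = \prod_(j < k) (s - INR j).
  by apply: eq_bigr => j _; rewrite hornerXsubC INRE.
have -> : \prod_(j < n - k) ((n%:R - j%:R)%:P - 'X).[s] = \prod_(j < n - k) (INR n - s - INR j).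
  apply: eq_bigr => j _; rewrite hornerD hornerN hornerC hornerX !INRE; ring.
rewrite !INRE !factE !RmultE !RdivE.
have h1 := fact_neq0 k; have h2 := fact_neq0 (n - k).
by field; rewrite ?h1 ?h2 ?mulf_neq0.
Qed.
End Alg.

Set Bullet Behavior "Strict Subproofs".

Lemma fold_Rplus_app (l1 l2 : list R) :
  fold_right Rplus 0 (l1 ++ l2) = fold_right Rplus 0 l1 + fold_right Rplus 0 l2.
Proof. induction l1 as [|a l IH]; simpl; [ring | rewrite IH; ring]. Qed.

Lemma fold_flat {A B : Type} (w : B -> R) (p : B -> bool) (g : A -> list B) (l : list A) :
  fold_right Rplus 0 (map w (filter p (flat_map g l))) =
  fold_right Rplus 0 (map (fun a => fold_right Rplus 0 (map w (filter p (g a)))) l).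
Proof.
induction l as [|a l IH]; simpl; [reflexivity|].
rewrite filter_app, map_app, fold_Rplus_app, IH; reflexivity.
Qed.

Lemma filter_map_cons (j : nat) (p : list nat -> bool) (T : list (list nat)) :
  filter p (map (cons j) T) = map (cons j) (filter (fun js => p (j :: js)) T).
Proof.
induction T as [|x T IH]; simpl; [reflexivity|].
destruct (p (j :: x)); simpl; rewrite IH; reflexivity.
Qed.

Lemma fold_scal {A : Type} (c : R) (f : A -> R) (l : list A) :
  fold_right Rplus 0 (map (fun x => c * f x) l) = c * fold_right Rplus 0 (map f l).
Proof. induction l as [|a l IH]; simpl; [ring | rewrite IH; ring]. Qed.

Lemma filter_false {A : Type} (p : A -> bool) (l : list A) :
  (forall x, p x = false) -> filter p l = nil.
Proof. intros H; induction l as [|a l IH]; simpl; [reflexivity | rewrite H; exact IH]. Qed.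

Lemma sumR_seq (F : nat -> R) n : fold_right Rplus 0 (map F (seq 0 n)) = sumR n F.
Proof.
induction n as [|n IH]; [reflexivity|].
rewrite seq_S, map_app, fold_Rplus_app, IH; simpl; ring.
Qed.

Lemma sumR_ext n f g : (forall i, (i < n)%nat -> f i = g i) -> sumR n f = sumR n g.
Proof.
induction n as [|n IH]; intros H; simpl; [reflexivity|].
rewrite IH, H; [reflexivity | lia | intros; apply H; lia].
Qed.

Lemma sumR_zero_tail a b G : (forall j, (a <= j)%nat -> G j = 0) -> sumR (a + b) G = sumR a G.
Proof.
intros H; induction b as [|b IH]; [rewrite Nat.add_0_r; reflexivity|].
rewrite Nat.add_succ_r; simpl; rewrite IH, H; [ring | lia].
Qed.

Lemma sum_f_R0_sumR f n : sum_f_R0 f n = sumR (S n) f.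
Proof. induction n as [|n IH]; simpl; [ring | rewrite IH; reflexivity]. Qed.

Definition wt (m : nat) (js : list nat) : R :=
  / fold_right Rmult 1 (map (fun j => INR (fact (m + j))) js).

Definition Sg m k N r := fold_right Rplus 0
  (map (wt m) (filter (fun js => Nat.eqb (list_sumn js) r) (tuples k N))).

Lemma INR_fact_neq0 n : INR (fact n) <> 0.
Proof. apply not_0_INR, fact_neq_0. Qed.

Lemma Sg_ee m k N r : (r <= N)%nat -> INR (fact m) ^ k * Sg m k N r = ee m k r.
Proof.
revert r; induction k as [|k IH]; intros r Hr.
- destruct r as [|r]; unfold Sg, wt; simpl; [rewrite Rinv_1; ring | ring].
- unfold Sg; simpl tuples. rewrite fold_flat.
  simpl ee. rewrite sum_f_R0_sumR.
  rewrite (sumR_ext (S r) (fun j => hh m j * ee m k (r - j)) (fun j => if Nat.leb j r then hh m j * ee m k (r - j) else 0)).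
  2: { intros j Hj; replace (Nat.leb j r) with true; [reflexivity| symmetry; apply Nat.leb_le; lia]. }
  rewrite <- (sumR_zero_tail (S r) (N - r) (fun j => if Nat.leb j r then hh m j * ee m k (r - j) else 0)).
  2: { intros j Hj; destruct (Nat.leb j r) eqn:E; [apply Nat.leb_le in E; lia | reflexivity]. }
  replace (S r + (N - r))%nat with (N + 1)%nat by lia.
  rewrite <- sumR_seq, <- fold_scal.
  f_equal. apply map_ext_in. intros j Hj. apply in_seq in Hj.
  rewrite filter_map_cons, map_map.
  destruct (Nat.leb j r) eqn:E.
  + apply Nat.leb_le in E.
    rewrite (filter_ext (fun js => Nat.eqb (list_sumn (j :: js)) r)
                        (fun js => Nat.eqb (list_sumn js) (r - j))).
    2: { intros js; simpl. destruct (Nat.eqb (j + list_sumn js) r) eqn:E1;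
         destruct (Nat.eqb (list_sumn js) (r - j)) eqn:E2; try reflexivity;
         [apply Nat.eqb_eq in E1; apply Nat.eqb_neq in E2 | apply Nat.eqb_eq in E2; apply Nat.eqb_neq in E1]; lia. }
    rewrite (map_ext (fun x => wt m (j :: x)) (fun x => / INR (fact (m + j)) * wt m x)).
    2: { intros x; unfold wt; simpl. rewrite Rinv_mult. reflexivity. }
    rewrite fold_scal. rewrite <- (IH (r - j)%nat) by lia. unfold Sg, hh.
    simpl pow. field. apply INR_fact_neq0.
  + rewrite filter_false; [simpl; ring|].
    intros js; simpl. apply Nat.eqb_neq. apply Nat.leb_gt in E. lia.
Qed.

Lemma Ccoef_ee m n k : Ccoef m n k = INR (fact n) * ee m k n.
Proof.
unfold Ccoef. rewrite <- (Sg_ee m k n n) by lia. unfold Sg, wt. ring.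
Qed.

Lemma sumR_le n f g : (forall i, (i < n)%nat -> f i <= g i) -> sumR n f <= sumR n g.
Proof.
induction n as [|n IH]; intros H; simpl; [lra|].
apply Rplus_le_compat; [apply IH; intros; apply H; lia | apply H; lia].
Qed.

Lemma Rabs_sumR n f : Rabs (sumR n f) <= sumR n (fun i => Rabs (f i)).
Proof.
induction n as [|n IH]; simpl; [rewrite Rabs_R0; lra|].
eapply Rle_trans; [apply Rabs_triang | lra].
Qed.

Lemma sumR_scal n c f : sumR n (fun i => c * f i) = c * sumR n f.
Proof. induction n as [|n IH]; simpl; [ring | rewrite IH; ring]. Qed.


Lemma sumR_shift n f : sumR (S n) f = f 0%nat + sumR n (fun i => f (S i)).
Proof.
induction n as [|n IH]; [simpl; ring|].
change (sumR (S (S n)) f) with (sumR (S n) f + f (S n)).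
rewrite IH; simpl; ring.
Qed.

Lemma sumR_nonneg n f : (forall i, (i < n)%nat -> 0 <= f i) -> 0 <= sumR n f.
Proof.
induction n as [|n IH]; intros H; simpl; [lra|].
assert (0 <= f n) by (apply H; lia).
assert (0 <= sumR n f) by (apply IH; intros; apply H; lia). lra.
Qed.

Lemma geom_bound M n : 2 <= M -> sumR (S n) (fun i => M ^ (n - i)) <= 2 * M ^ n.
Proof.
intros HM; induction n as [|n IH]; [simpl; lra|].
rewrite sumR_shift. rewrite Nat.sub_0_r.
rewrite (sumR_ext (S n) (fun i => M ^ (S n - S i)) (fun i => M ^ (n - i))) by (intros; reflexivity).
simpl pow. assert (0 <= M ^ n) by (apply pow_le; lra). nra.
Qed.

Lemma hh_nonneg m j : 0 <= hh m j.
Proof.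
unfold hh. apply Rle_mult_inv_pos; [apply pos_INR | apply lt_0_INR, lt_O_fact].
Qed.

Lemma hh_le1 m j : hh m j <= 1.
Proof.
unfold hh. assert (H : (fact m <= fact (m + j))%nat) by (apply fact_le; lia).
apply le_INR in H. assert (0 < INR (fact m)) by apply lt_0_INR, lt_O_fact.
apply (Rmult_le_reg_r (INR (fact (m + j)))); [lra|].
field_simplify; [lra | apply INR_fact_neq0].
Qed.

Lemma hhS_le1 m j : INR (S j) * hh m (S j) <= 1.
Proof.
unfold hh. assert (H : (S j * fact m <= fact (m + S j))%nat).
{ replace (m + S j)%nat with (S (m + j)) by lia.
  change (fact (S (m + j))) with (S (m + j) * fact (m + j))%nat.
  apply Nat.mul_le_mono; [lia | apply fact_le; lia]. }
apply le_INR in H. rewrite mult_INR in H.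
assert (0 < INR (fact (m + S j))) by apply lt_0_INR, lt_O_fact.
apply (Rmult_le_reg_r (INR (fact (m + S j)))); [lra|].
field_simplify; [lra | apply INR_fact_neq0].
Qed.

Lemma aa_RECS m s n : RECS m s (Alg.aa m s) n.
Proof. apply Alg.REC_split, Alg.aa_REC. Qed.

Lemma aa_bound m s : forall n, Rabs (Alg.aa m s n) <= (2 * Rabs s + 2) ^ n.
Proof.
set (M := 2 * Rabs s + 2). set (u := Alg.aa m s).
assert (HM : 2 <= M) by (unfold M; pose proof (Rabs_pos s); lra).
assert (H0 : u 0%nat = 1) by (apply Alg.aa0).
assert (Hall : forall n j, (j <= n)%nat -> Rabs (u j) <= M ^ j).
{ induction n as [|n IH]; intros j Hj.
  - replace j with 0%nat by lia. rewrite H0, Rabs_R1. simpl; lra.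
  - destruct (le_lt_dec j n) as [Hjn|Hjn]; [apply IH; exact Hjn|].
    replace j with (S n) by lia. clear j Hj Hjn.
    pose proof (aa_RECS m s n) as E. unfold RECS in E. fold u in E.
    set (A := sumR (S n) (fun i => nR (S i) * hh m (S i) * u (n - i)%nat)) in E.
    set (B := sumR n (fun i => hh m (S i) * (nR (n - i) * u (n - i)%nat))) in E.
    assert (HMn : 0 <= M ^ n) by (apply pow_le; lra).
    assert (HA : Rabs A <= 2 * M ^ n).
    { eapply Rle_trans; [apply Rabs_sumR|].
      eapply Rle_trans; [|apply (geom_bound M n HM)].
      apply sumR_le. intros i Hi.
      rewrite Rabs_mult, Rabs_right.
      2: { apply Rle_ge, Rmult_le_pos; [apply pos_INR | apply hh_nonneg]. }
      pose proof (hhS_le1 m i). pose proof (IH (n - i)%nat ltac:(lia)).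
      assert (0 <= nR (S i) * hh m (S i)) by (apply Rmult_le_pos; [apply pos_INR | apply hh_nonneg]).
      pose proof (Rabs_pos (u (n - i)%nat)). unfold nR in *. nra. }
    assert (HB : Rabs B <= INR (S n) * (2 * M ^ n)).
    { eapply Rle_trans; [apply Rabs_sumR|].
      apply Rle_trans with (sumR n (fun i => INR (S n) * M ^ (n - i))).
      - apply sumR_le. intros i Hi.
        rewrite !Rabs_mult, (Rabs_right (hh m (S i))) by (apply Rle_ge, hh_nonneg).
        rewrite (Rabs_right (nR (n - i))) by (apply Rle_ge, pos_INR).
        pose proof (hh_le1 m (S i)). pose proof (hh_nonneg m (S i)).
        pose proof (IH (n - i)%nat ltac:(lia)).
        assert (nR (n - i) <= INR (S n)) by (unfold nR; apply le_INR; lia).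
        assert (0 <= nR (n - i)) by apply pos_INR.
        pose proof (Rabs_pos (u (n - i)%nat)).
        assert (0 <= M ^ (n - i)) by (apply pow_le; lra).
        assert (Rabs (u (n - i)%nat) * nR (n - i) <= M ^ (n - i) * INR (S n)) by nra.
        assert (0 <= nR (n - i) * Rabs (u (n - i)%nat)) by (apply Rmult_le_pos; assumption).
        nra.
      - rewrite sumR_scal. apply Rmult_le_compat_l; [apply pos_INR|].
        eapply Rle_trans; [|apply (geom_bound M n HM)].
        simpl sumR at 2. assert (0 <= M ^ (n - n)) by (apply pow_le; lra). lra. }
    assert (HS : 1 <= INR (S n)) by (rewrite S_INR; pose proof (pos_INR n); lra).
    assert (Hu : INR (S n) * Rabs (u (S n)) <= Rabs s * (2 * M ^ n) + INR (S n) * (2 * M ^ n)).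
    { replace (INR (S n) * Rabs (u (S n))) with (Rabs (nR (S n) * u (S n))).
      2: { rewrite Rabs_mult, Rabs_right; [reflexivity | apply Rle_ge, pos_INR]. }
      rewrite E. eapply Rle_trans; [apply Rabs_triang|]. rewrite Rabs_Ropp, Rabs_mult.
      pose proof (Rabs_pos s). nra. }
    simpl pow. assert (HMdef : M = 2 * Rabs s + 2) by reflexivity. clearbody M.
    pose proof (Rabs_pos s).
    assert (0 <= (INR (S n) - 1) * (Rabs s * M ^ n)) by (apply Rmult_le_pos; [lra | apply Rmult_le_pos; lra]).
    set (P := M ^ n) in *. clearbody P. rewrite HMdef. pose proof (Rabs_pos (u (S n))).
    apply (Rmult_le_reg_l (INR (S n))); [lra|]. nra. }
intros n; apply (Hall n n); lia.
Qed.

Lemma radius_of_bound (a : nat -> R) (M r : R) :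
  (forall n, Rabs (a n * r ^ n) <= M) -> Rbar_le r (CV_radius a).
Proof. intros H; destruct (CV_radius_bounded a) as [Hub _]; apply Hub; exists M; exact H. Qed.

Lemma rad_aa m s : Rbar_le (/ (2 * Rabs s + 2)) (CV_radius (Alg.aa m s)).
Proof.
set (M := 2 * Rabs s + 2).
assert (HM : 2 <= M) by (unfold M; pose proof (Rabs_pos s); lra).
apply (radius_of_bound _ 1). intros n.
rewrite Rabs_mult, <- RPow_abs, (Rabs_right (/ M)) by (apply Rle_ge, Rlt_le, Rinv_0_lt_compat; lra).
rewrite pow_inv.
pose proof (aa_bound m s n) as Hb. fold M in Hb.
assert (0 < M ^ n) by (apply pow_lt; lra).
apply (Rmult_le_reg_r (M ^ n)); [lra|].
rewrite Rmult_assoc, Rinv_l by lra. lra.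
Qed.

Lemma rad_hh m : Rbar_le 1 (CV_radius (hh m)).
Proof.
apply (radius_of_bound _ 1). intros n. rewrite pow1, Rmult_1_r.
rewrite Rabs_right by (apply Rle_ge, hh_nonneg). apply hh_le1.
Qed.

Lemma coef_eq m s n :
  PS_mult (hh m) (PS_derive (Alg.aa m s)) n = s * PS_mult (PS_derive (hh m)) (Alg.aa m s) n.
Proof.
pose proof (Alg.aa_REC m s n) as H. unfold REC, nR in H. unfold PS_mult, PS_derive.
rewrite H. reflexivity.
Qed.

Lemma in_rad (a : nat -> R) (r x : R) : Rbar_le r (CV_radius a) -> Rabs x < r -> Rbar_lt (Rabs x) (CV_radius a).
Proof. intros H1 H2. eapply Rbar_lt_le_trans; [|exact H1]. exact H2. Qed.

Lemma hh0' m : hh m 0 = 1.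
Proof. exact (Alg.hh0 m). Qed.

Lemma ode_solution m s : exists r, 0 < r /\ forall x, Rabs x < r ->
  0 < PSeries (hh m) x /\ PSeries (Alg.aa m s) x = exp (s * ln (PSeries (hh m) x)).
Proof.
set (M := 2 * Rabs s + 2).
assert (HM : 2 <= M) by (unfold M; pose proof (Rabs_pos s); lra).
set (rho := / M).
assert (Hrho : 0 < rho) by (unfold rho; apply Rinv_0_lt_compat; lra).
assert (Hrho1 : rho <= 1).
{ unfold rho. rewrite <- Rinv_1. apply Rinv_le_contravar; lra. }
set (a := Alg.aa m s). set (h := hh m). set (H := PSeries h).
assert (Ra : forall x, Rabs x < rho -> Rbar_lt (Rabs x) (CV_radius a)).
{ intros x Hx. apply (in_rad _ rho); [apply rad_aa | exact Hx]. }
assert (Rh : forall x, Rabs x < rho -> Rbar_lt (Rabs x) (CV_radius h)).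
{ intros x Hx. apply (in_rad _ 1); [apply rad_hh | lra]. }
assert (H0 : H 0 = 1) by (unfold H; rewrite PSeries_0; apply hh0').
assert (Hc : continuity_pt H 0).
{ apply PSeries_continuity. apply Rh. rewrite Rabs_R0; exact Hrho. }
unfold continuity_pt, continue_in, limit1_in, limit_in in Hc.
destruct (Hc (/2)) as [del [Hdel Hd]]; [lra|].
set (r := Rmin rho del).
assert (Hr : 0 < r) by (unfold r; apply Rmin_pos; lra).
assert (Hpos : forall x, Rabs x < r -> / 2 < H x).
{ intros x Hx. destruct (Req_dec x 0) as [->|Hx0]; [rewrite H0; lra|].
  assert (Hlt : Rabs x < del) by (eapply Rlt_le_trans; [exact Hx | apply Rmin_r]).
  specialize (Hd x). simpl in Hd. unfold R_dist in Hd. rewrite H0 in Hd.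
  assert (Rabs (H x - 1) < / 2).
  { apply Hd. split; [unfold D_x, no_cond; split; [exact I | congruence] | rewrite Rminus_0_r; exact Hlt]. }
  apply Rabs_def2 in H1. lra. }
assert (Hrr : forall x, Rabs x < r -> Rabs x < rho) by (intros x Hx; eapply Rlt_le_trans; [exact Hx | apply Rmin_l]).
set (W := fun y => PSeries a y * exp (- s * ln (H y))).
assert (HW : forall y, Rabs y < r -> derivable_pt_lim W y 0).
{ intros y Hy.
  set (dP := PSeries (PS_derive a) y). set (dH := PSeries (PS_derive h) y).
  assert (DP : derivable_pt_lim (PSeries a) y dP).
  { apply is_derive_Reals, is_derive_PSeries, Ra, Hrr, Hy. }
  assert (DH : derivable_pt_lim H y dH).
  { apply is_derive_Reals, is_derive_PSeries, Rh, Hrr, Hy. }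
  assert (Hy0 : 0 < H y) by (pose proof (Hpos y Hy); lra).
  assert (DL : derivable_pt_lim (fun z => ln (H z)) y (/ H y * dH)).
  { apply (derivable_pt_lim_comp H ln y dH (/ H y)); [exact DH | apply derivable_pt_lim_ln; exact Hy0]. }
  assert (DS : derivable_pt_lim (fun z => - s * ln (H z)) y (- s * (/ H y * dH))).
  { apply (derivable_pt_lim_scal (fun z => ln (H z)) (- s) y). exact DL. }
  assert (DE : derivable_pt_lim (fun z => exp (- s * ln (H z))) y (exp (- s * ln (H y)) * (- s * (/ H y * dH)))).
  { apply (derivable_pt_lim_comp (fun z => - s * ln (H z)) exp y); [exact DS | apply derivable_pt_lim_exp]. }
  assert (DW := derivable_pt_lim_mult (PSeries a) (fun z => exp (- s * ln (H z))) y dP _ DP DE).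
  replace 0 with (dP * exp (- s * ln (H y)) + PSeries a y * (exp (- s * ln (H y)) * (- s * (/ H y * dH)))).
  { exact DW. }
  assert (E1 : H y * dP = s * (dH * PSeries a y)).
  { unfold H, dP, dH.
    rewrite <- PSeries_mult; [| apply Rh, Hrr, Hy | rewrite CV_radius_derive; apply Ra, Hrr, Hy].
    rewrite <- PSeries_mult; [| rewrite CV_radius_derive; apply Rh, Hrr, Hy | apply Ra, Hrr, Hy].
    rewrite <- PSeries_scal. apply PSeries_ext. intros n. unfold PS_scal. simpl. apply coef_eq. }
  replace (dP * exp (- s * ln (H y)) + PSeries a y * (exp (- s * ln (H y)) * (- s * (/ H y * dH))))
    with (exp (- s * ln (H y)) / H y * (H y * dP - s * (dH * PSeries a y))) by (field; lra).
  rewrite E1; ring. }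
exists r; split; [exact Hr|]. intros x Hx. split; [pose proof (Hpos x Hx); lra|].
assert (Wc : W x = W 0).
{ destruct (MVT_gen W 0 x (fun _ => 0)) as [c [Hc1 Hc2]].
  - intros y Hy. apply is_derive_Reals. apply HW.
    assert (Rabs y < Rabs x).
    { unfold Rmin, Rmax in Hy. destruct (Rle_dec 0 x); apply Rabs_def1;
      rewrite ?Rabs_right, ?Rabs_left in * by lra; lra. }
    lra.
  - intros y Hy. apply derivable_continuous_pt. exists 0. apply HW.
    assert (Rabs y <= Rabs x).
    { unfold Rmin, Rmax in Hy. destruct (Rle_dec 0 x);
      [rewrite (Rabs_right x) by lra | rewrite (Rabs_left x) by lra];
      apply Rabs_le; lra. }
    lra.
  - lra. }
unfold W in Wc. rewrite H0, ln_1, Rmult_0_r, exp_0 in Wc.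
replace (PSeries a 0) with 1 in Wc by (symmetry; rewrite PSeries_0; apply Alg.aa0).
assert (Hex : exp (- s * ln (H x)) * exp (s * ln (H x)) = 1).
{ rewrite <- exp_plus. replace (- s * ln (H x) + s * ln (H x)) with 0 by ring. apply exp_0. }
fold a. fold H.
replace (PSeries a x) with (PSeries a x * (exp (- s * ln (H x)) * exp (s * ln (H x)))) by (rewrite Hex; ring).
rewrite <- Rmult_assoc, Wc. ring.
Qed.

Lemma exp_tail m x : Rabs x < 1 ->
  exp x - sumR m (fun k => x ^ k / INR (fact k)) = x ^ m / INR (fact m) * PSeries (hh m) x.
Proof.
intros Hx.
set (e := fun k => x ^ k / INR (fact k)).
assert (Se : is_series e (exp x)).
{ pose proof (is_exp_Reals x) as H. unfold is_pseries in H.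
  eapply is_series_ext; [|exact H]. intros k. unfold e. rewrite <- pow_n_pow. reflexivity. }
assert (St : is_series (fun k => e (m + k)%nat) (exp x - sumR m e)).
{ destruct m as [|m'].
  - simpl. replace (exp x - 0) with (exp x) by ring. exact Se.
  - apply (is_series_incr_n e (S m')); [lia|].
    match goal with |- is_series _ ?v => replace v with (exp x); [exact Se|] end.
    simpl pred. rewrite sum_n_Reals, sum_f_R0_sumR. unfold plus; simpl. ring. }
assert (Hh : is_series (fun k => x ^ m / INR (fact m) * (hh m k * x ^ k)) (x ^ m / INR (fact m) * PSeries (hh m) x)).
{ assert (Hex : ex_pseries (hh m) x).
  { apply CV_radius_inside. apply (in_rad _ 1); [apply rad_hh | exact Hx]. }
  pose proof (PSeries_correct _ _ Hex) as H. unfold is_pseries in H.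
  apply (is_series_scal_l (x ^ m / INR (fact m))) in H.
  eapply is_series_ext; [|exact H]. intros k. unfold scal; simpl.
  rewrite <- (pow_n_pow x k). change (x ^ m / INR (fact m) * (pow_n x k * hh m k) = x ^ m / INR (fact m) * (hh m k * pow_n x k)). ring. }
apply is_series_unique in St. apply is_series_unique in Hh.
rewrite <- St, <- Hh. apply Series_ext. intros k. unfold e, hh.
rewrite pow_add. field. split; apply INR_fact_neq0.
Qed.

Lemma Gbase_eq m x : Rabs x < 1 -> 0 < PSeries (hh m) x -> Gbase m x = / PSeries (hh m) x.
Proof.
intros Hx Hp. unfold Gbase. destruct (Req_EM_T x 0) as [->|Hx0].
- rewrite PSeries_0, hh0'. symmetry; apply Rinv_1.
- rewrite exp_tail by exact Hx. field.
  split; [lra | split; [apply INR_fact_neq0 | apply pow_nonzero; exact Hx0]].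
Qed.

Lemma bounded_terms (u : nat -> R) (l : R) : is_series u l -> exists K, forall n, Rabs (u n) <= K.
Proof.
intros H. assert (Hl : is_lim_seq u 0) by (apply ex_series_lim_0; exists l; exact H).
destruct (filterlim_bounded u) as [K HK].
- exists 0. exact Hl.
- exists K. intros n. exact (HK n).
Qed.

Theorem corollary4p1 (t : R) (m : nat) (B : nat -> R -> R)
  (HB : forall x : R,
      egf_near0 (fun n => B n x) (fun z => Rpower (Gbase m z) t * exp (x * z))) :
  forall n : nat,
    B n 0 = sumR (S n) (fun k => gbinom (- t) k * gbinom (INR n + t) (n - k) * Ccoef m n k).
Proof.
intros n.
set (s := - t).
destruct (ode_solution m s) as [r [Hr Hsol]].
destruct (HB 0) as [d [Hd Hser]].
set (c := fun k => B k 0 / INR (fact k)).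
set (r1 := Rmin (Rmin r d) (1 / 2)).
assert (Hr1 : 0 < r1) by (unfold r1; repeat apply Rmin_pos; lra).
assert (Hr1r : r1 <= r) by (unfold r1; eapply Rle_trans; [apply Rmin_l | apply Rmin_l]).
assert (Hr1d : r1 <= d) by (unfold r1; eapply Rle_trans; [apply Rmin_l | apply Rmin_r]).
assert (Hr12 : r1 <= 1 / 2) by (unfold r1; apply Rmin_r).
assert (Sc : forall x, Rabs x < r1 ->
  is_series (fun k => c k * x ^ k) (Rpower (Gbase m x) t * exp (0 * x))).
{ intros x Hx. pose proof (Hser x ltac:(lra)) as H. apply is_series_Reals in H.
  eapply is_series_ext; [|exact H]. intros k. unfold c. change (B k 0 * x ^ k / INR (fact k) = B k 0 / INR (fact k) * x ^ k). field. apply INR_fact_neq0. }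
assert (Key : forall x, Rabs x < r1 -> PSeries c x = PSeries (Alg.aa m s) x).
{ intros x Hx. unfold PSeries at 1. rewrite (is_series_unique _ _ (Sc x Hx)).
  destruct (Hsol x ltac:(lra)) as [Hp Hq]. rewrite Hq.
  rewrite Gbase_eq by (try lra; exact Hp).
  unfold Rpower. rewrite ln_Rinv by exact Hp. rewrite Rmult_0_l, exp_0, Rmult_1_r.
  unfold s. f_equal. ring. }
assert (Rc : Rbar_lt 0 (CV_radius c)).
{ destruct (bounded_terms _ _ (Sc (r1 / 2) ltac:(rewrite Rabs_right; lra))) as [K HK].
  apply (Rbar_lt_le_trans _ (r1 / 2)); [simpl; lra|].
  apply (radius_of_bound _ K). exact HK. }
assert (Ra : Rbar_lt 0 (CV_radius (Alg.aa m s))).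
{ eapply Rbar_lt_le_trans; [|apply rad_aa]. simpl. apply Rinv_0_lt_compat.
  pose proof (Rabs_pos s). lra. }
assert (Ecoef : c n = Alg.aa m s n).
{ apply (PSeries_ext_recip c (Alg.aa m s) n Rc Ra).
  exists (mkposreal r1 Hr1). intros y Hy. apply Key.
  change (Rabs (y - 0) < r1) in Hy. rewrite Rminus_0_r in Hy. exact Hy. }
unfold c in Ecoef.
replace (B n 0) with (INR (fact n) * Alg.aa m s n).
2: { rewrite <- Ecoef. field. apply INR_fact_neq0. }
rewrite Alg.aa_formula. unfold formula. rewrite <- sumR_scal.
apply sumR_ext. intros k Hk. rewrite Ccoef_ee.
replace (INR n - s) with (INR n + t) by (unfold s; ring).
unfold s. ring.
Qed.
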